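(* Let $t \geq 1$ be an integer and let $\{(A_i, B_i) : i \in I\}$ be a finite collection of pairs of finite sets (indexed by a finite set $I$) such that: (a) $|A_i \cap B_i| \leq t$ for each $i \in I$; (b) $|A_i \cap B_j| \geq t$ for all $i, j \in I$ with $i \neq j$; (c') if $A_i \cap B_i = A_j \cap B_j$ for some $i \neq j$, then it is not the case that $A_i \cap B_j = A_i \cap B_i = A_j \cap B_i$. Then $$\sum_{i \in I} \binom{|A_i \cup B_i|}{|A_i \setminus B_i|}^{-1} \binom{|B_i|}{|A_i \cap B_i|}^{-1} \leq 1.$$ *)

(* Defs.v *)
From mathcomp Require Import all_boot all_order all_algebra.
Set Implicit Arguments.
Unset Strict Implicit.
Unset Printing Implicit Defensive.

(* Main.v *)
Require Import Defs.
From mathcomp Require Import all_boot all_order all_algebra.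
From mathcomp Require Import ring.
Import Order.TTheory GRing.Theory Num.Theory.

Section Aux.
Variable T : finType.

Definition pat (A B : {set T}) (y z : T) : bool :=
  ((y \in A) && (y \notin B) && (z \in B)) ||
  ((y \in A) && (y \in B) && (z \in B) && (z \notin A)).

Lemma Ebef (bef : T -> T -> Prop) A B y z :
  (forall y z, pat A B y z -> bef y z) -> y \in A -> z \in B ->
  (y \notin B) || (z \notin A) -> bef y z.
Proof.
move=> H yA zB h; apply: H; rewrite /pat yA zB /=.
by move: h; case: (y \in B).
Qed.
Arguments Ebef {bef A B y z}.

Lemma coreA (bef : T -> T -> Prop) (asym : forall y z, bef y z -> bef z y -> False)
  (t : nat) (Ai Bi Aj Bj : {set T}) :
  (1 <= t)%N -> (#|Ai :&: Bi| <= t)%N -> (#|Aj :&: Bj| <= t)%N ->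
  (t <= #|Ai :&: Bj|)%N -> (t <= #|Aj :&: Bi|)%N ->
  (forall y z, pat Ai Bi y z -> bef y z) -> (forall y z, pat Aj Bj y z -> bef y z) ->
  Ai :&: Bj \subset Aj :&: Bj ->
  [/\ Ai :&: Bi = Aj :&: Bj, Ai :&: Bj = Ai :&: Bi & Ai :&: Bi = Aj :&: Bi].
Proof.
move=> t1 hi hj hij hji Ei Ej sub.
have Qj : Ai :&: Bj = Aj :&: Bj.
  apply/eqP; rewrite eqEcard sub /=; exact: leq_trans hj hij.
have [w wQ] : exists w, w \in Aj :&: Bj.
  apply/set0Pn; rewrite -card_gt0 -Qj; exact: leq_trans t1 hij.
have wAi : w \in Ai by move: wQ; rewrite -Qj inE => /andP[].
have wBj : w \in Bj by move: wQ; rewrite inE => /andP[].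
have sub2 : Aj :&: Bi \subset Ai :&: Bi.
  apply/subsetP => z; rewrite !inE => /andP[zAj zBi]; rewrite zBi andbT.
  apply/negPn/negP => zAi.
  have b1 : bef w z by apply: (Ebef Ei wAi zBi); rewrite zAi orbT.
  have zBj : z \notin Bj.
    apply/negP=> zBj.
    have : z \in Ai :&: Bj by rewrite Qj inE zAj zBj.
    by rewrite inE (negbTE zAi).
  have b2 : bef z w by apply: (Ebef Ej zAj wBj); rewrite zBj.
  exact: asym b1 b2.
have Qi : Aj :&: Bi = Ai :&: Bi.
  apply/eqP; rewrite eqEcard sub2 /=; exact: leq_trans hi hji.
have QQ : Ai :&: Bi = Aj :&: Bj.
  case: (boolP (Aj :&: Bj \subset Bi)) => [sB | nsB].
  - apply/eqP; rewrite eq_sym eqEcard; apply/andP; split.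
      apply/subsetP=> y yQ; rewrite inE (subsetP sB y yQ) andbT.
      by move: yQ; rewrite -Qj inE => /andP[].
    rewrite -Qj; exact: leq_trans hi hij.
  - have [v vQ vnB] := subsetPn nsB.
    have vAi : v \in Ai by move: vQ; rewrite -Qj inE => /andP[].
    have vBj : v \in Bj by move: vQ; rewrite inE => /andP[].
    apply/eqP; rewrite eqEcard; apply/andP; split.
      apply/subsetP => y yQ.
      have yBi : y \in Bi by move: yQ; rewrite inE => /andP[].
      have yAi : y \in Ai by move: yQ; rewrite inE => /andP[].
      have yAj : y \in Aj by move: yQ; rewrite -Qi inE => /andP[].
      rewrite inE yAj /=; apply/negPn/negP => yBj.
      have b1 : bef v y by apply: (Ebef Ei vAi yBi); rewrite vnB.
      have b2 : bef y v by apply: (Ebef Ej yAj vBj); rewrite yBj.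
      exact: asym b1 b2.
    by rewrite -Qi; exact: leq_trans hj hji.
split => //; by rewrite ?Qj ?QQ ?Qi.
Qed.
Arguments coreA {bef} asym {t Ai Bi Aj Bj}.

Lemma core2 (bef : T -> T -> Prop) (asym : forall y z, bef y z -> bef z y -> False)
  (t : nat) (Ai Bi Aj Bj : {set T}) :
  (1 <= t)%N -> (#|Ai :&: Bi| <= t)%N -> (#|Aj :&: Bj| <= t)%N ->
  (t <= #|Ai :&: Bj|)%N -> (t <= #|Aj :&: Bi|)%N ->
  (forall y z, pat Ai Bi y z -> bef y z) -> (forall y z, pat Aj Bj y z -> bef y z) ->
  [/\ Ai :&: Bi = Aj :&: Bj, Ai :&: Bj = Ai :&: Bi & Ai :&: Bi = Aj :&: Bi].
Proof.
move=> t1 hi hj hij hji Ei Ej.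
case: (boolP (Ai :&: Bj \subset Aj :&: Bj)) => [sub|nsub]; first by have := coreA asym t1 hi hj hij hji Ei Ej sub.
have [y yQ ynQ] := subsetPn nsub.
have yAi : y \in Ai by move: yQ; rewrite inE => /andP[].
have yBj : y \in Bj by move: yQ; rewrite inE => /andP[].
have yAj : y \notin Aj by move: ynQ; rewrite inE yBj andbT.
have sub' : Aj :&: Bi \subset Ai :&: Bi.
  apply/subsetP => z; rewrite !inE => /andP[zAj zBi]; rewrite zBi andbT.
  apply/negPn/negP => zAi.
  have b1 : bef y z by apply: (Ebef Ei yAi zBi); rewrite zAi orbT.
  have b2 : bef z y by apply: (Ebef Ej zAj yBj); rewrite yAj orbT.
  exact: asym b1 b2.
have [e1 e2 e3] := coreA asym t1 hj hi hji hij Ej Ei sub'.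
split; first by rewrite e1.
  by rewrite -e3 e1.
by rewrite e2 e1.
Qed.

Arguments core2 {bef} asym {t Ai Bi Aj Bj}.
End Aux.
Arguments core2 {T bef} asym {t Ai Bi Aj Bj}.
Arguments pat {T}.

Section Count.
Variable T : finType.
Local Open Scope ring_scope.

Definition w (a c d : nat) : rat := (a`! * c`! * d`!)%:R / (a + c + d)`!%:R.

Definition wU (A B U : {set T}) :=
  w #|U :&: (A :\: B)| #|U :&: (A :&: B)| #|U :&: (B :\: A)|.

Definition cond (A B U : {set T}) (x : T) : bool :=
  if x \in A then
    (if x \in B then #|U :&: (B :\: A)| == 0%N
     else (#|U :&: (A :&: B)| + #|U :&: (B :\: A)| == 0)%N)
  else true.

Definition E (A B : {set T}) (s : seq T) :=
  forall y z, y \in s -> z \in s -> pat A B y z -> (index y s < index z s)%N.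

Lemma card0_mem (S : {set T}) z : #|S| = 0%N -> z \in S -> False.
Proof. by move/card0_eq => h; rewrite h. Qed.

Lemma E_rcons (A B U : {set T}) s x : E A B s -> x \notin s -> (forall z, z \in s -> z \in U) ->
  cond A B U x -> E A B (rcons s x).
Proof.
move=> Es xs sU cx y z; rewrite -!cats1 !mem_cat !inE.
have ix : index x (s ++ [:: x]) = size s by rewrite index_cat (negbTE xs) /= eqxx addn0.
move=> /orP[ys|/eqP->] /orP[zs|/eqP->] p.
- rewrite !index_cat ys zs; exact: Es.
- by rewrite ix index_cat ys index_mem.
- exfalso; move: p cx; rewrite /pat /cond.
  case xA: (x \in A); case xB: (x \in B) => //=.
  + case zB: (z \in B); case zA: (z \in A) => //= _ /eqP h.
    apply: (@card0_mem _ z h); by rewrite !inE sU // zB zA.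
  + case zB: (z \in B) => //= _; rewrite addn_eq0 => /andP[/eqP h1 /eqP h2].
    case zA: (z \in A).
      apply: (@card0_mem _ z h1); by rewrite !inE sU // zB zA.
    apply: (@card0_mem _ z h2); by rewrite !inE sU // zB zA.
- by move: p; rewrite /pat; case: (x \in A); case: (x \in B).
Qed.

Arguments E_rcons {A B U s x}.

Lemma cardD1S (U S : {set T}) x : x \in U ->
  #|(U :\ x) :&: S| = (#|U :&: S| - (x \in S))%N.
Proof.
move=> xU.
have -> : (U :\ x) :&: S = (U :&: S) :\ x.
  by apply/setP => y; rewrite !inE; case: (y == x); case: (y \in U); case: (y \in S).
by rewrite (cardsD1 x (U :&: S)) inE xU /= addKn.
Qed.

Lemma sumInd (U S : {set T}) :
  (\sum_(x in U) ((x \in S) : nat))%N = #|U :&: S|.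
Proof.
rewrite -sum1_card big_mkcond [RHS]big_mkcond /=.
by apply: eq_bigr => x _; rewrite !inE; case: (x \in U); case: (x \in S).
Qed.

Lemma sumIndR (U S : {set T}) (k : rat) :
  \sum_(x in U) (((x \in S) : nat)%:R * k) = #|U :&: S|%:R * k.
Proof. by rewrite -big_distrl /= -natr_sum sumInd. Qed.

Lemma fact_neq0 n : (n`!%:R : rat) != 0.
Proof. by rewrite pnatr_eq0 -lt0n fact_gt0. Qed.

Lemma succ_neq0 n : (n.+1%:R : rat) != 0.
Proof. by rewrite pnatr_eq0. Qed.

Lemma wd a c d : d.+1%:R * w a c d = (a + c + d.+1)%:R * w a c d.+1.
Proof.
rewrite /w addnS !factS !natrM.
have := fact_neq0 (a + c + d); have := succ_neq0 (a + c + d).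
move=> h1 h2; field; rewrite h2 /=; rewrite -[X in X + _]/(1%:R) -!natrD pnatr_eq0 //.
Qed.

Lemma wc a c d : c.+1%:R * w a c d = (a + c.+1 + d)%:R * w a c.+1 d.
Proof.
rewrite /w addnS addSn !factS !natrM.
have := fact_neq0 (a + c + d); have := succ_neq0 (a + c + d).
move=> h1 h2; field; rewrite h2 /=; rewrite -[X in X + _]/(1%:R) -!natrD pnatr_eq0 //.
Qed.

Lemma wa a c d : a.+1%:R * w a c d = (a.+1 + c + d)%:R * w a.+1 c d.
Proof.
rewrite /w !addSn !factS !natrM.
have := fact_neq0 (a + c + d); have := succ_neq0 (a + c + d).
move=> h1 h2; field; rewrite h2 /=; rewrite -[X in X + _]/(1%:R) -!natrD pnatr_eq0 //.
Qed.

Lemma numid n a c d :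
  (n + a + c + d)%:R * w a c d =
  n%:R * w a c d + d%:R * w a c d.-1 +
  c%:R * (((d == 0)%N : nat)%:R * w a c.-1 d) +
  a%:R * (((c + d == 0)%N : nat)%:R * w a.-1 c d).
Proof.
case: d => [|d].
  case: c => [|c].
    case: a => [|a].
      by rewrite !addn0 !mul0r !addr0.
    rewrite /= !mul1r !addn0 !mul0r !addr0 wa !addn0 natrD; ring.
  rewrite /= !mul1r !addn0 !mul0r !addr0 wc addn0 !natrD; ring.
rewrite /= wd [(c + d.+1)%N]addnS /= !mul0r !mulr0 !addr0 !natrD; ring.
Qed.

Lemma cardpart (A B U : {set T}) :
  #|U| = (#|U :&: ~: (A :|: B)| + #|U :&: (A :\: B)| + #|U :&: (A :&: B)| + #|U :&: (B :\: A)|)%N.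
Proof.
rewrite -!sumInd -sum1_card -!big_split /=.
apply: eq_bigr => x _; rewrite !inE.
by case: (x \in A); case: (x \in B).
Qed.

Lemma recur (A B U : {set T}) : #|U|%:R * wU A B U =
  \sum_(x in U) (if cond A B U x then wU A B (U :\ x) else 0).
Proof.
have pw : forall x, x \in U ->
  (if cond A B U x then wU A B (U :\ x) else 0) =
   ((x \in ~: (A :|: B)) : nat)%:R * wU A B U +
   ((x \in B :\: A) : nat)%:R * w #|U :&: (A :\: B)| #|U :&: (A :&: B)| #|U :&: (B :\: A)|.-1 +
   ((x \in A :&: B) : nat)%:R * (((#|U :&: (B :\: A)| == 0)%N : nat)%:R *
        w #|U :&: (A :\: B)| #|U :&: (A :&: B)|.-1 #|U :&: (B :\: A)|) +
   ((x \in A :\: B) : nat)%:R * (((#|U :&: (A :&: B)| + #|U :&: (B :\: A)| == 0)%N : nat)%:R *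
        w #|U :&: (A :\: B)|.-1 #|U :&: (A :&: B)| #|U :&: (B :\: A)|).
  move=> x xU; rewrite /cond /wU !(cardD1S U _ _ xU) !inE.
  case xA: (x \in A); case xB: (x \in B) => /=;
    rewrite ?subn0 ?subn1 ?mulr0n ?mulr1n ?mul0r ?add0r ?addr0 ?mul1r //.
  - by case: (_ == 0)%N; rewrite ?mulr0n ?mulr1n ?mul0r ?mul1r.
  - by case: (_ == 0)%N; rewrite ?mulr0n ?mulr1n ?mul0r ?mul1r.
rewrite (eq_bigr _ pw) !big_split /= !sumIndR.
rewrite {1}(cardpart A B U); exact: numid.
Qed.

End Count.
Arguments wU {T}.
Arguments cond {T}.
Arguments E {T}.
Arguments E_rcons {T A B U s x}.
Arguments recur {T}.

Section Main.
Variables (T I : finType) (A B : I -> {set T}).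
Local Open Scope ring_scope.

Lemma mainind n : forall (J : {set I}) (U : {set T}), #|U| = n ->
  (forall s, uniq s -> (forall x, (x \in s) = (x \in U)) -> forall i j,
     i \in J -> j \in J -> i != j -> E (A i) (B i) s -> E (A j) (B j) s -> False) ->
  \sum_(i in J) wU (A i) (B i) U <= 1.
Proof.
elim: n => [|n IH] J U hU disj.
- have U0 : U = set0 by apply/eqP; rewrite -cards_eq0 hU.
  have w1 : forall i, wU (A i) (B i) U = 1.
    by move=> i; rewrite /wU U0 !set0I !cards0 /w fact0 /= divr1.
  case: (set_0Vmem J) => [->|[i iJ]]; first by rewrite big_set0 ler01.
  rewrite (big_setD1 i iJ) /=.
  have -> : J :\ i = set0.
    apply/setP => j; rewrite !inE; apply/negP => /andP[ji jJ].
    apply: (disj [::] _ _ j i) => //.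
    by move=> x; rewrite U0 inE.
  by rewrite big_set0 addr0 w1.
- have U0 : (0 < #|U|)%N by rewrite hU.
  rewrite -(ler_pM2l (x := #|U|%:R)) ?ltr0n // mulr1 mulr_sumr.
  rewrite (eq_bigr _ (fun i _ => recur (A i) (B i) U)) exchange_big /=.
  rewrite -sumr_const.
  apply: ler_sum => x xU.
  rewrite -big_mkcondr /=.
  rewrite (eq_bigl (fun i => i \in [set i in J | cond (A i) (B i) U x])); last first.
    by move=> i; rewrite inE.
  apply: (IH _ (U :\ x)).
    by move: hU; rewrite (cardsD1 x U) xU add1n => -[].
  move=> s us hs i j; rewrite !inE => /andP[iJ ci] /andP[jJ cj] ij Ei Ej.
  have xs : x \notin s by rewrite hs !inE eqxx.
  have sU : forall z, z \in s -> z \in U by move=> z; rewrite hs !inE => /andP[].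
  apply: (disj (rcons s x) _ _ i j iJ jJ ij).
  - by rewrite rcons_uniq xs us.
  - move=> y; rewrite mem_rcons inE hs !inE.
    by case: (eqVneq y x) => [->|].
  - exact: E_rcons Ei xs sU ci.
  - exact: E_rcons Ej xs sU cj.
Qed.

End Main.

Lemma wT (T : finType) (X Y : {set T}) :
  ((('C(#|X :|: Y|, #|X :\: Y|))%:R)^-1 * (('C(#|Y|, #|X :&: Y|))%:R)^-1 : rat)%R
  = wU X Y setT.
Proof.
rewrite /wU !setTI /w.
set a := #|X :\: Y|; set c := #|X :&: Y|; set d := #|Y :\: X|.
have hY : #|Y| = (c + d)%N.
  by rewrite -(cardsID X Y) setIC.
have hXY : #|X :|: Y| = (a + (c + d))%N.
  have e1 : (X :|: Y) :&: Y = Y.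
    by apply/setP=> z; rewrite !inE; case: (z \in X); case: (z \in Y).
  have e2 : (X :|: Y) :\: Y = X :\: Y.
    by apply/setP=> z; rewrite !inE; case: (z \in X); case: (z \in Y).
  by rewrite -(cardsID Y (X :|: Y)) e1 e2 hY addnC.
rewrite hXY hY.
have le1 : (a <= a + (c + d))%N by rewrite leq_addr.
have le2 : (c <= c + d)%N by rewrite leq_addr.
have b1 := bin_fact le1; rewrite addKn in b1.
have b2 := bin_fact le2; rewrite addKn in b2.
have r1 := congr1 (fun n => n%:R : rat) b1; rewrite /= !natrM in r1.
have r2 := congr1 (fun n => n%:R : rat) b2; rewrite /= !natrM in r2.
have n1 : ('C(a + (c + d), a)%:R : rat) != 0%R by rewrite pnatr_eq0 -lt0n bin_gt0.
have n2 : ('C(c + d, c)%:R : rat) != 0%R by rewrite pnatr_eq0 -lt0n bin_gt0.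
rewrite -r2 in r1.
rewrite -addnA -r1 !natrM.
have := fact_neq0 a; have := fact_neq0 c; have := fact_neq0 d.
move=> f1 f2 f3; field.
by rewrite n1 n2 f1 f2 f3.
Qed.

Theorem theorem1p9 (T I : finType) (t : nat) (A B : I -> {set T}) :
  (1 <= t)%N ->
  (forall i, (#|A i :&: B i| <= t)%N) ->
  (forall i j, i != j -> (t <= #|A i :&: B j|)%N) ->
  (forall i j, i != j -> A i :&: B i = A j :&: B j ->
     ~ (A i :&: B j = A i :&: B i /\ A i :&: B i = A j :&: B i)) ->
  (\sum_(i : I) (('C(#|A i :|: B i|, #|A i :\: B i|))%:R)^-1
                * (('C(#|B i|, #|A i :&: B i|))%:R)^-1 <= 1 :> rat)%R.
Proof.
move=> t1 ha hb hc.
have M := @mainind T I A B _ [set: I] [set: T] (erefl _).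
rewrite (eq_bigr _ (fun i _ => @wT T (A i) (B i) : _ = _)).
rewrite (eq_bigl (fun i => i \in [set: I])); last by move=> i; rewrite inE.
apply: M => s us hs i j _ _ ij Ei Ej.
pose bef y z := (index y s < index z s)%N.
have asym : forall y z, bef y z -> bef z y -> False.
  by move=> y z h1 h2; have := ltn_trans h1 h2; rewrite ltnn.
have E' : forall k, E (A k) (B k) s -> forall y z, pat (A k) (B k) y z -> bef y z.
  by move=> k Ek y z; apply: Ek; rewrite hs inE.
have ji : j != i by rewrite eq_sym.
have [e1 e2 e3] := core2 asym t1 (ha i) (ha j) (hb i j ij) (hb j i ji) (E' i Ei) (E' j Ej).
exact: (hc i j ij e1 (conj e2 e3)).
Qed.
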